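(* For any two distinct jobs $j,k$, in the schedule produced by $1$-SORT we have $D(j,k)\le 2\,D^*(j,k)=2\min\{\sigma_j,\sigma_k\}$.
   Context: Setting: single machine, jobs $J=\{1,\dots,n\}$, each job $j$ with test time $t_j\ge0$ and processing time $p_j\ge0$ (revealed only when the test is executed); each job's test must be executed before its processing part, which may start any time after the test; operations are non-preemptive and the machine does one at a time. $\sigma_j=t_j+p_j$. Standing assumption (general position): no two of the $3n$ numbers $t_1,\dots,t_n,p_1,\dots,p_n,\sigma_1,\dots,\sigma_n$ are equal. Algorithm $1$-SORT: keep a priority queue of available operations, initially the test of every job $j$ with priority $t_j$; repeatedly remove a minimum-priority operation and execute it immediately; after executing the test of $j$, insert the processing part of $j$ with priority $p_j$. For a schedule and distinct jobs $j,k$, let $d_{k,j}$ be the total amount of time during which operations of $k$ are executed before the completion time of $j$, and $D(j,k)=d_{j,k}+d_{k,j}$, evaluated for the $1$-SORT schedule. $D^*(j,k)=\min\{\sigma_j,\sigma_k\}$. *)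

(* Defs.v *)
From HB Require Import structures.
From mathcomp Require Import all_boot all_order all_algebra.
Set Implicit Arguments. Unset Strict Implicit. Unset Printing Implicit Defensive.
Import Order.TTheory GRing.Theory Num.Theory.
Local Open Scope ring_scope.

Section OneSort.
Variables (R : realFieldType) (n : nat) (t p : 'I_n -> R).

(* An operation: (j, true) = test of job j, (j, false) = processing part of j. *)
Definition op := ('I_n * bool)%type.

(* Duration of an operation; it is also its priority in 1-SORT. *)
Definition dur (o : op) : R := if o.2 then t o.1 else p o.1.

Definition sigma (j : 'I_n) : R := t j + p j.

Definition minop (o0 : op) (Q : seq op) : op :=
  foldl (fun a b => if dur b < dur a then b else a) o0 Q.

Fixpoint run (fuel : nat) (Q : seq op) : seq op :=
  match fuel with
  | 0 => [::]
  | fuel'.+1 =>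
    match Q with
    | [::] => [::]
    | o0 :: Q' =>
      let o := minop o0 Q' in
      o :: run fuel' (rem o Q ++ (if o.2 then [:: (o.1, false)] else [::]))
    end
  end%N.

(* The sequence of operations executed by 1-SORT (2n operations in total). *)
Definition sched : seq op := run (2 * n) [seq (j, true) | j <- enum 'I_n].

(* Operations are executed immediately one after another from time 0. *)
Definition start (o : op) : R := \sum_(o' <- take (index o sched) sched) dur o'.
Definition compl (o : op) : R := start o + dur o.

Definition Cj (j : 'I_n) : R := compl (j, false).

(* d_{k,j}: total time during which operations of k are executed before C_j. *)
Definition dkj (k j : 'I_n) : R :=
  \sum_(o <- sched | o.1 == k)
     Num.max 0 (Num.min (compl o) (Cj j) - start o).

Definition D (j k : 'I_n) : R := dkj j k + dkj k j.

Definition Dstar (j k : 'I_n) : R := Num.min (sigma j) (sigma k).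

Definition general_position : Prop :=
  (forall i j : 'I_n, i != j ->
     [/\ t i != t j, p i != p j & sigma i != sigma j]) /\
  (forall i j : 'I_n, [/\ t i != p j, t i != sigma j & p i != sigma j]).

End OneSort.

(* Main.v *)
Require Import Defs.
From HB Require Import structures.
From mathcomp Require Import all_boot all_order all_algebra.
From mathcomp Require Import zify ring lra.
Import Order.TTheory GRing.Theory Num.Theory.
Local Open Scope ring_scope.


Lemma minop_props (R : realFieldType) (n : nat) (t p : 'I_n -> R) o0 Q :
  minop t p o0 Q \in o0 :: Q /\
  forall x, x \in o0 :: Q -> dur t p (minop t p o0 Q) <= dur t p x.
Proof.
rewrite /minop; elim: Q o0 => [|y Q IH] o0 /=.
  by split; [rewrite inE | move=> x; rewrite inE => /eqP ->].
set a := if _ then _ else _.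
have [H1 H2] := IH a.
split.
  move: H1; rewrite !inE /a; case: ifP => _ /orP [/eqP ->|->]; rewrite ?eqxx ?orbT //.
move=> x; rewrite !inE => /or3P [/eqP ->|/eqP ->|xQ].
- apply: le_trans (H2 a _) _; first by rewrite inE eqxx.
  rewrite /a; case: ifP => // /ltW //.
- apply: le_trans (H2 a _) _; first by rewrite inE eqxx.
  rewrite /a; case: ifP => // /negbT; rewrite -leNgt //.
- by apply: H2; rewrite inE xQ orbT.
Qed.

Lemma run_S (R : realFieldType) (n : nat) (t p : 'I_n -> R) f o0 Q :
  run t p f.+1 (o0 :: Q) =
  let o := minop t p o0 Q in
  o :: run t p f (rem o (o0 :: Q) ++ (if o.2 then [:: (o.1, false)] else [::])).
Proof. by []. Qed.

Lemma run_key (R : realFieldType) (n : nat) (t p : 'I_n -> R) fuel Q a z :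
  (a < size (run t p fuel Q))%N ->
  (z \in Q \/ (z.2 = false /\ (z.1, true) \in take a (run t p fuel Q))) ->
  z \notin take a (run t p fuel Q) ->
  dur t p (nth z (run t p fuel Q) a) <= dur t p z.
Proof.
elim: fuel Q a => [|f IH] [|o0 Q'] a //; rewrite run_S.
set o := minop t p o0 Q'.
have [oin omin] := minop_props _ _ t p o0 Q'.
case: a => [|a]; rewrite [size _]/= [take _ _]/= [nth _ _ _]/=.
  move=> _ [zQ|[_]] // _; exact: omin.
rewrite ltnS => ha hz; rewrite in_cons negb_or => /andP [zo zn].
apply: IH => //.
case: hz => [zQ|[z2 ]].
  left; rewrite mem_cat; apply/orP; left.
  have := perm_to_rem oin => /perm_mem /(_ z); rewrite zQ inE (negbTE zo) /=.
  by move=> <-.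
rewrite inE => /orP [/eqP ho|ht]; last by right.
left; rewrite mem_cat -ho /= inE; apply/orP; right.
by case: z zo z2 ho {zn} => z1 z2' /= _ -> _.
Qed.

Lemma run_src (R : realFieldType) (n : nat) (t p : 'I_n -> R) fuel Q b z :
  (b < size (run t p fuel Q))%N ->
  let x := nth z (run t p fuel Q) b in
  x \in Q \/ (x.2 = false /\ (x.1, true) \in take b (run t p fuel Q)).
Proof.
elim: fuel Q b => [|f IH] [|o0 Q'] b //; rewrite run_S.
set o := minop t p o0 Q'.
have [oin omin] := minop_props _ _ t p o0 Q'.
case: b => [|b]; rewrite [size _]/= [take _ _]/= [nth _ _ _]/=; first by left.
rewrite ltnS => hb.
case: (IH _ _ hb) => [|[h1 h2]]; last by right; split=> //; rewrite inE h2 orbT.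
rewrite mem_cat => /orP [hr|]; first by left; exact: (@mem_rem _ o (o0 :: Q') _ hr).
case ho: (o.2); rewrite ?inE // => /eqP ->; right; split=> //=.
by rewrite inE; apply/orP; left; case: (o) ho => ? ? /= ->.
Qed.


Definition meas {n} (Q : seq (op n)) : nat := sumn [seq (if x.2 then 2 else 1)%N | x <- Q].
Definition procs {n} (Q : seq (op n)) : seq (op n) := [seq (x.1, false) | x <- Q & x.2].
Definition ins {n} (o : op n) : seq (op n) := if o.2 then [:: (o.1, false)] else [::].

Lemma meas_perm {n} {Q1 Q2 : seq (op n)} : perm_eq Q1 Q2 -> meas Q1 = meas Q2.
Proof. by move=> h; rewrite /meas; apply: perm_sumn; apply: perm_map. Qed.

Lemma procs_perm {n} {Q1 Q2 : seq (op n)} : perm_eq Q1 Q2 -> perm_eq (procs Q1) (procs Q2).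
Proof. by move=> h; apply: perm_map; apply: perm_filter. Qed.

Lemma step_meas {n} {Q : seq (op n)} {o} : o \in Q ->
  (meas (rem o Q ++ ins o)).+1 = meas Q.
Proof.
move=> oin; rewrite (meas_perm (perm_to_rem oin)) /meas map_cat sumn_cat /ins /=.
case: (o.2) => /=; lia.
Qed.

Lemma step_perm {n} {Q : seq (op n)} {o} : o \in Q ->
  perm_eq (o :: (rem o Q ++ ins o) ++ procs (rem o Q ++ ins o)) (Q ++ procs Q).
Proof.
move=> oin; have hP := perm_to_rem oin.
rewrite perm_sym; apply: perm_trans (perm_cat hP (procs_perm hP)) _.
have -> : procs (rem o Q ++ ins o) = procs (rem o Q).
  by rewrite /procs filter_cat map_cat /ins; case: (o.2); rewrite /= cats0.
rewrite /procs /ins /=; case: (o.2) => /=.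
  by rewrite -catA perm_cons.
by rewrite cats0 perm_refl.
Qed.

Lemma run_S' (R : realFieldType) (n : nat) (t p : 'I_n -> R) f o0 Q :
  run t p f.+1 (o0 :: Q) =
  minop t p o0 Q :: run t p f (rem (minop t p o0 Q) (o0 :: Q) ++ ins (minop t p o0 Q)).
Proof. by []. Qed.

Lemma run_perm (R : realFieldType) (n : nat) (t p : 'I_n -> R) fuel Q :
  (meas Q <= fuel)%N -> perm_eq (run t p fuel Q) (Q ++ procs Q).
Proof.
elim: fuel Q => [|f IH] [|o0 Q'] //.
  by rewrite /meas /=; case: ifP.
rewrite run_S'.
have [oin _] := minop_props _ _ t p o0 Q'.
move: (minop t p o0 Q') oin => o oin hm.
rewrite -(permPr (step_perm oin)).
rewrite perm_cons; apply: IH.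
by move: hm; rewrite -(step_meas oin).
Qed.

Set Implicit Arguments.

Definition Qt n : seq (op n) := [seq (j, true) | j <- enum 'I_n].

Lemma meas_Qt n : meas (Qt n) = (2 * n)%N.
Proof.
rewrite /meas /Qt.
have h : forall l : seq 'I_n, sumn [seq (if x.2 then 2 else 1)%N | x <- [seq (j, true) | j <- l]] = (2 * size l)%N.
  by elim=> //= a l ->; lia.
by rewrite h size_enum_ord.
Qed.

Lemma procs_Qt n : procs (Qt n) = [seq (j, false) | j <- enum 'I_n].
Proof. by rewrite /procs /Qt filter_map /= filter_predT -map_comp. Qed.

Lemma sched_perm {R : realFieldType} {n} (t p : 'I_n -> R) :
  perm_eq (sched t p) (Qt n ++ [seq (j, false) | j <- enum 'I_n]).
Proof. by rewrite -procs_Qt; apply: run_perm; rewrite meas_Qt. Qed.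

Lemma sched_uniq {R : realFieldType} {n} (t p : 'I_n -> R) : uniq (sched t p).
Proof.
have hu : uniq (enum 'I_n) := enum_uniq _.
rewrite (perm_uniq (sched_perm t p)) cat_uniq /Qt !map_inj_uniq ?hu //;
  try by move=> x y [].
rewrite -enumT hu andbT; apply/hasPn => x /mapP [j _ ->]; apply/mapP => [[i _]] //.
Qed.

Lemma sched_mem {R : realFieldType} {n} (t p : 'I_n -> R) (o : op n) : o \in sched t p.
Proof.
rewrite (perm_mem (sched_perm t p)) mem_cat /Qt; case: o => i [].
  by rewrite map_f ?mem_enum.
by rewrite orbC map_f ?mem_enum.
Qed.

Lemma test_before {R : realFieldType} {n} (t p : 'I_n -> R) (i : 'I_n) :
  (index (i, true) (sched t p) < index (i, false) (sched t p))%N.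
Proof.
have hm := sched_mem t p (i, false).
have hb : (index (i, false) (sched t p) < size (run t p (2 * n) (Qt n)))%N.
  by rewrite index_mem.
have := @run_src _ _ t p _ _ _ (i, false) hb; rewrite /= -/(sched t p) nth_index //.
case => [|[_]]; first by move=> /mapP [j _].
by rewrite in_take ?sched_mem.
Qed.

Lemma key2 {R : realFieldType} {n} (t p : 'I_n -> R) (o z : op n) :
  (index o (sched t p) < index z (sched t p))%N ->
  (z.2 \/ (z.2 = false /\ (index (z.1, true) (sched t p) < index o (sched t p))%N)) ->
  dur t p o <= dur t p z.
Proof.
move=> hoz hz.
have ho : (index o (sched t p) < size (run t p (2 * n) (Qt n)))%N.
  by rewrite index_mem sched_mem.
have := @run_key _ _ t p _ _ _ z ho.
rewrite -/(sched t p) (set_nth_default o) ?index_mem ?sched_mem // nth_index ?sched_mem //.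
apply.
  case: hz => [z2|[z2 hi]]; [left|right].
    by case: z z2 {hoz} => i b /= ->; rewrite /Qt map_f ?mem_enum.
  by split=> //; rewrite in_take ?sched_mem.
by rewrite in_take ?sched_mem // -leqNgt ltnW.
Qed.

Unset Implicit Arguments.


Definition SS {R : realFieldType} {n} (t p : 'I_n -> R) m :=
  \sum_(o <- take m (sched t p)) dur t p o.

Definition term {R : realFieldType} {n} (t p : 'I_n -> R) o C :=
  Num.max 0 (Num.min (compl t p o) C - start t p o).

Lemma dkj_eq {R : realFieldType} {n} (t p : 'I_n -> R) k j :
  dkj t p k j = term t p (k, true) (Cj t p j) + term t p (k, false) (Cj t p j).
Proof.
rewrite /dkj (perm_big _ (sched_perm t p)) big_cat /= /Qt !big_map /=.
by rewrite -!enumT !big_enum_cond !big_pred1_eq.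
Qed.

Section S.
Variables (R : realFieldType) (n : nat) (t p : 'I_n -> R).
Hypotheses (ht : forall j, 0 <= t j) (hp : forall j, 0 <= p j).

Lemma dur_ge0 o : 0 <= dur t p o.
Proof. by rewrite /dur; case: ifP. Qed.

Lemma SS_mono m1 m2 : (m1 <= m2)%N -> SS t p m1 <= SS t p m2.
Proof.
move=> /subnKC <-; rewrite /SS takeD big_cat /= lerDl.
by apply: sumr_ge0 => o _; apply: dur_ge0.
Qed.

Lemma start_eq o : start t p o = SS t p (index o (sched t p)).
Proof. by []. Qed.

Lemma compl_eq o : compl t p o = SS t p (index o (sched t p)).+1.
Proof.
rewrite /compl /start /SS (take_nth o) ?index_mem ?sched_mem //.
by rewrite nth_index ?sched_mem // -cats1 big_cat big_seq1.
Qed.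

Lemma term_le o C : term t p o C <= dur t p o.
Proof.
rewrite /term ge_max dur_ge0 /=.
by rewrite lerBlDl /compl ge_min addrC lexx.
Qed.

Lemma term_0 o C : C <= start t p o -> term t p o C <= 0.
Proof.
move=> h; rewrite /term ge_max lexx /= subr_le0.
by apply: le_trans h; rewrite ge_min lexx orbT.
Qed.
End S.


Lemma idx_neq {R : realFieldType} {n} (t p : 'I_n -> R) (x y : op n) :
  x != y -> index x (sched t p) != index y (sched t p).
Proof.
move=> hxy; apply/eqP => he; move/eqP: hxy; apply.
by rewrite -(nth_index x (sched_mem t p x)) he nth_index // sched_mem.
Qed.

Lemma case_lt (R : realFieldType) (n : nat) (t p : 'I_n -> R)
  (ht : forall j, 0 <= t j) (hp : forall j, 0 <= p j) (j k : 'I_n) (hjk : j != k) :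
  (index (k, false) (sched t p) < index (j, false) (sched t p))%N ->
  D t p j k <= 2 * Dstar t p j k.
Proof.
move=> hb.
set s := sched t p.
have hk := test_before t p k; have hj := test_before t p j.
have key := @key2 _ _ t p.
rewrite /D !dkj_eq.
have e1 := @term_le _ _ t p ht hp (k, true) (Cj t p j).
have e2 := @term_le _ _ t p ht hp (k, false) (Cj t p j).
have e3 : term t p (j, false) (Cj t p k) <= 0.
  apply: term_0; rewrite /Cj compl_eq start_eq; by apply: (@SS_mono _ _ t p ht hp).
have e4 := @term_le _ _ t p ht hp (j, true) (Cj t p k).
rewrite /dur /= in e1 e2 e4.
rewrite /Dstar /sigma.
have hmin : forall X, X <= 2 * (t j + p j) -> X <= 2 * (t k + p k) ->
    X <= 2 * Num.min (t j + p j) (t k + p k).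
  move=> X h1 h2; case: (leP (t j + p j) (t k + p k)) => _ //.
have tj0 := ht j; have tk0 := ht k; have pj0 := hp j; have pk0 := hp k.
have neq2' : index (k, true) (sched t p) != index (j, true) (sched t p).
  by apply: idx_neq; apply/eqP => -[] /eqP; rewrite eq_sym (negbTE hjk).
have neq1' : index (j, true) (sched t p) != index (k, false) (sched t p).
  by apply: idx_neq; apply/eqP => -[].
case: (ltngtP (index (j, true) (sched t p)) (index (k, false) (sched t p))) => hjb; last first.
- by rewrite hjb eqxx in neq1'.
- have e5 : term t p (j, true) (Cj t p k) <= 0.
    apply: term_0; rewrite /Cj compl_eq start_eq; by apply: (@SS_mono _ _ t p ht hp).
  have f1 := key (k, true) (j, true) (ltn_trans hk hjb) (or_introl erefl).
  have f2 := key (k, false) (j, true) hjb (or_introl erefl).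
  rewrite /dur /= in f1 f2.
  apply: hmin; lra.
have f3 := key (k, false) (j, false) hb (or_intror (conj erefl hjb)).
rewrite /dur /= in f3.
case: (ltngtP (index (k, true) (sched t p)) (index (j, true) (sched t p))) => hkj; last first.
- by rewrite hkj eqxx in neq2'.
- have f1 := key (j, true) (k, true) hkj (or_introl erefl).
  have f2 := key (k, true) (j, false) (ltn_trans hk hb) (or_intror (conj erefl hkj)).
  rewrite /dur /= in f1 f2.
  apply: hmin; lra.
have f1 := key (k, true) (j, true) hkj (or_introl erefl).
have f2 := key (j, true) (k, false) hjb (or_intror (conj erefl hkj)).
rewrite /dur /= in f1 f2.
apply: hmin; lra.
Qed.

Theorem mainTheorem5 (R : realFieldType) (n : nat) (t p : 'I_n -> R)
  (ht : forall j, 0 <= t j) (hp : forall j, 0 <= p j)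
  (hgp : general_position t p) (j k : 'I_n) (hjk : j != k) :
  D t p j k <= 2 * Dstar t p j k.
Proof.
have hne : index (j, false) (sched t p) != index (k, false) (sched t p).
  by apply: idx_neq; apply/eqP => -[] /eqP; rewrite (negbTE hjk).
case: (ltngtP (index (j, false) (sched t p)) (index (k, false) (sched t p))) => h.
- have hkj : k != j by rewrite eq_sym.
  have := case_lt _ _ t p ht hp k j hkj h.
  by rewrite /D /Dstar addrC minC.
- exact: case_lt _ _ t p ht hp j k hjk h.
- by rewrite h eqxx in hne.
Qed.
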